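(* Let $\mathbb{K}$ be a field of characteristic zero and let $\mathbb{D}=\{\nabla^{a(1)}_{i(1)},\ldots,\nabla^{a(m)}_{i(m)}\}$ be a finite set of homogeneous locally nilpotent derivations of $\mathbb{K}[x_1,\ldots,x_n]$ (defined below). Let $\mathbb{D}'\subseteq\mathbb{D}$ be the set of those derivations whose vertices in the graph $\Gamma(\mathbb{D})$ lie on some oriented cycle, and $\mathbb{D}''=\mathbb{D}\setminus\mathbb{D}'$. Assume that all derivations in $\mathbb{D}'$ have weight zero. Let $D_1\in\mathbb{D}'$, $D_2\in\mathbb{D}''$ and $D:=[D_1,D_2]$. Then either $D=0$, or $D$ is (a nonzero scalar multiple of) a derivation of the form $\nabla^b_j$ and the vertex corresponding to $D$ in the graph $\Gamma(\mathbb{D}\cup\{D\})$ is not contained in any oriented cycle.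
   Context: $\partial_i=\partial/\partial x_i$. For $1\le i\le n$ and $a\in\mathbb{Z}^n_{\ge0}$ with $a_i=0$, $\nabla^a_i:=x_1^{a_1}\cdots x_{i-1}^{a_{i-1}}x_{i+1}^{a_{i+1}}\cdots x_n^{a_n}\partial_i$; its weight is $\sum_ja_j-1$ (so weight zero derivations are $x_j\partial_i$ with $j\neq i$). For a finite set $\mathbb{D}=\{\nabla^{a(1)}_{i(1)},\ldots,\nabla^{a(m)}_{i(m)}\}$, the directed graph $\Gamma(\mathbb{D})$ has vertices $1,\ldots,m$ (vertex $s$ corresponding to $\nabla^{a(s)}_{i(s)}$), and $(s,j)$ is an edge if and only if the $i(s)$-th coordinate of $a(j)$ is positive. $[D_1,D_2]=D_1\circ D_2-D_2\circ D_1$. *)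

(* Defs.v *)
From mathcomp Require Import all_boot all_order all_algebra.
From mathcomp Require Import mpoly.
Set Implicit Arguments. Unset Strict Implicit. Unset Printing Implicit Defensive.
Import GRing.Theory.
Local Open Scope ring_scope.

(* A derivation nabla^a_i is encoded by its data (a, i) : 'X_{1..n} * 'I_n,
   with a i = 0 required separately. *)
Definition dder (n : nat) := ('X_{1..n} * 'I_n)%type.

Definition nabla (K : fieldType) (n : nat) (a : 'X_{1..n}) (i : 'I_n)
  (p : {mpoly K[n]}) : {mpoly K[n]} := 'X_[a] * mderiv i p.

Definition nablaD (K : fieldType) (n : nat) (d : dder n) (p : {mpoly K[n]}) :=
  nabla d.1 d.2 p.

(* weight of nabla^a_i is mdeg a - 1; weight zero means mdeg a = 1 *)
Definition weight0 (n : nat) (d : dder n) : bool := mdeg d.1 == 1%N.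

Definition Gamma (n : nat) (V : finType) (f : V -> dder n) : rel V :=
  fun s j => (0 < (f j).1 (f s).2)%N.

Definition on_cycle (n : nat) (V : finType) (f : V -> dder n) (s : V) : bool :=
  [exists j, Gamma f s j && connect (Gamma f) j s].

Definition labD (n : nat) (Dl : seq (dder n)) : 'I_(size Dl) -> dder n :=
  fun s => tnth (in_tuple Dl) s.

Definition labDext (n : nat) (Dl : seq (dder n)) (d : dder n)
  : option 'I_(size Dl) -> dder n :=
  fun o => oapp (@labD n Dl) d o.
Arguments labD {n} Dl s.
Arguments labDext {n} Dl d o.

(* Main.v *)
Require Import Defs.
From mathcomp Require Import all_boot all_order all_algebra.
From mathcomp Require Import mpoly.
From mathcomp Require Import ring.
Import GRing.Theory.
Local Open Scope ring_scope.

Lemma connect_map (V W : finType) (e : rel V) (e' : rel W) (phi : V -> W) :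
  (forall u v, e u v -> connect e' (phi u) (phi v)) ->
  forall u v, connect e u v -> connect e' (phi u) (phi v).
Proof.
move=> H u v /connectP [p pth ->]; elim: p u pth => [|w p IH] u /=.
  by rewrite connect0.
by move/andP=> [euw pw]; apply: connect_trans (H _ _ euw) (IH _ pw).
Qed.

Lemma no_cycle n (V : finType) (f : V -> dder n) (s2 : V) (b' : 'X_{1..n}) (j' : 'I_n) :
  ~~ on_cycle f s2 -> b' j' = 0%N ->
  (forall t, (0 < (f t).1 j')%N -> exists u, Gamma f s2 u && connect (Gamma f) u t) ->
  (forall t, (0 < b' (f t).2)%N -> connect (Gamma f) t s2) ->
  ~~ on_cycle (fun o => oapp f (b', j') o) None.
Proof.
move=> hs hb hout hin; apply/negP => /existsP [[t|]]; last first.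
  by rewrite /Gamma /= hb.
move=> /andP [ht hc].
have H : forall u v, Gamma (fun o => oapp f (b', j') o) u v ->
    connect (Gamma f) (oapp id s2 u) (oapp id s2 v).
  move=> [u|] [v|] /=; rewrite /Gamma /=.
  - by move=> h; apply: connect1.
  - by move/hin.
  - by move/hout => [w /andP [h1 h2]]; apply: connect_trans (connect1 h1) h2.
  - by rewrite hb.
have := @connect_map _ _ _ _ _ H _ _ hc => /= hts.
move: ht; rewrite /Gamma /= => /hout [w /andP [h1 h2]].
move/negP: hs; apply; apply/existsP; exists w; rewrite h1 /=.
exact: connect_trans h2 hts.
Qed.

Lemma comm_id (K : fieldType) n (k i j : 'I_n) (b : 'X_{1..n}) (p : {mpoly K[n]}) :
  nabla U_(k)%MM i (nabla b j p) - nabla b j (nabla U_(k)%MM i p) =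
  'X_[U_(k)] * mderiv i 'X_[b] * mderiv j p - 'X_[b] * mderiv j 'X_[U_(k)] * mderiv i p.
Proof.
rewrite /nabla !mderivM (mderiv_comm j i p).
ring.
Qed.

Theorem lemma2 (K : fieldType) (n : nat) (Dl : seq (dder n))
  (hchar : [pchar K] =i pred0)
  (huniq : uniq Dl)
  (hwf : forall d, d \in Dl -> d.1 d.2 = 0%N)
  (hw0 : forall s : 'I_(size Dl), on_cycle (labD Dl) s -> weight0 (labD Dl s))
  (s1 s2 : 'I_(size Dl))
  (h1 : on_cycle (labD Dl) s1) (h2 : ~~ on_cycle (labD Dl) s2) :
  let D := fun p : {mpoly K[n]} =>
    nablaD (labD Dl s1) (nablaD (labD Dl s2) p)
    - nablaD (labD Dl s2) (nablaD (labD Dl s1) p) in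
  (forall p, D p = 0) \/
  (exists (c : K) (b : 'X_{1..n}) (j : 'I_n),
     [/\ c != 0, b j = 0%N,
         (forall p, D p = c *: nabla b j p)
       & ~~ on_cycle (labDext Dl (b, j)) None]).
Proof.
move=> D.
have [k ek] : exists k, (labD Dl s1).1 = U_(k)%MM.
  by have /mdeg1P [k /eqP ->] := hw0 _ h1; exists k.
case E1: (labD Dl s1) => [a i]; case E2: (labD Dl s2) => [b j].
rewrite E1 /= in ek; subst a.
have hbj : b j = 0%N.
  by have := hwf (labD Dl s2) (mem_tnth _ _); rewrite E2.
have key p : D p = 'X_[U_(k)] * mderiv i 'X_[b] * mderiv j p
   - 'X_[b] * mderiv j 'X_[U_(k)] * mderiv i p.
  by rewrite /D /nablaD E1 E2 /= comm_id.
have G12 : Gamma (labD Dl) s1 s2 = (0 < b i)%N by rewrite /Gamma E1 E2.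
have G21 : Gamma (labD Dl) s2 s1 = (k == j) by rewrite /Gamma E1 E2 /= mnm1E; case: (k == j).
have Gt1 t : Gamma (labD Dl) t s1 = (k == (labD Dl t).2) by rewrite /Gamma E1 /= mnm1E; case: (k == _).
have Gt2 t : Gamma (labD Dl) t s2 = (0 < b (labD Dl t).2)%N by rewrite /Gamma E2.
have G1t t : Gamma (labD Dl) s1 t = (0 < (labD Dl t).1 i)%N by rewrite /Gamma E1.
have G2t t : Gamma (labD Dl) s2 t = (0 < (labD Dl t).1 j)%N by rewrite /Gamma E2.
case: (posnP (b i)) => hbi; case: (eqVneq j k) => hjk.
- right; exists (-1), b, i; split => //.
  + by rewrite oppr_eq0 oner_eq0.
  + move=> p; rewrite key !mderivX hbi hjk mnm1E eqxx.
    have -> : (U_(k) - U_(k))%MM = 0%MM by apply/mnmP => l; rewrite mnmBE subnn mnmE.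
    by rewrite mpolyX0 scale0r mulr0 mul0r scale1r mulr1 sub0r /nabla scaleN1r.
  + apply: (@no_cycle n _ (labD Dl) s2 b i h2) => //.
    * move=> t ht; exists s1; rewrite G21 hjk eqxx /=.
      by apply: connect1; rewrite G1t.
    * by move=> t ht; apply: connect1; rewrite Gt2.
- have hkj : (k == j) = false by rewrite eq_sym (negPf hjk).
  left => p; rewrite key !mderivX hbi mnm1E hkj.
  by rewrite !scale0r !mulr0 !mul0r subr0.
- exfalso; move/negP: h2; apply; apply/existsP; exists s1.
  by rewrite G21 hjk eqxx /=; apply: connect1; rewrite G12.
- have hkj : (k == j) = false by rewrite eq_sym (negPf hjk).
  right; exists (b i)%:R, (U_(k) + (b - U_(i)))%MM, j; split.
  + by move/pcharf0P: hchar => ->; rewrite -lt0n.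
  + by rewrite mnmDE mnmBE mnm1E hbj sub0n hkj.
  + move=> p; rewrite key !mderivX mnm1E hkj.
    by rewrite scale0r mulr0 mul0r subr0 /nabla mpolyXD -scalerAr -scalerAl.
  + apply: (@no_cycle n _ (labD Dl) s2 (U_(k) + (b - U_(i)))%MM j h2) => //.
    * by rewrite mnmDE mnmBE mnm1E hbj sub0n hkj.
    * by move=> t ht; exists t; rewrite G2t ht connect0.
    * move=> t; rewrite mnmDE mnmBE mnm1E.
      case: eqP => [hk _|_ /= hl].
      - apply: (@connect_trans _ _ s1); apply: connect1; first by rewrite Gt1 hk.
        by rewrite G12.
      - by apply: connect1; rewrite Gt2; move: hl; case: (b _) => //.
Qed.
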